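(* Let $M$ be a connected two-dimensional manifold and $f:M\to\mathbb{R}^{0,2,1}$ a non-degenerate immersion. Suppose there is $\lambda\in C^\infty(M)$ with $h=\lambda g$, and suppose $f$ is not $d$-totally geodesic, i.e. $h\not\equiv0$. Then $\lambda$ is a nonzero constant. Moreover, there are constants $A,B,C\in\mathbb{R}$ such that $f(M)$ is an open subset of the paraboloid of revolution $$\left\{\left(u,v,\tfrac{\lambda}{2}(u^2+v^2)+Au+Bv+C\right)\ :\ (u,v)\in\mathbb{R}^2\right\}.$$ In particular, up to an affine isometry of $\mathbb{R}^{0,2,1}$, $f(M)$ is an open subset of $\{(u,v,u^2+v^2):(u,v)\in\mathbb{R}^2\}$.
   Context: $\mathbb{R}^{0,2,1}$ denotes $\mathbb{R}^3$ with coordinates $(x,y,z)$ and the degenerate form $(\cdot,\cdot)=dx^2+dy^2$. A non-degenerate immersion is a $C^\infty$ immersion $f:M\to\mathbb{R}^{0,2,1}$ of a 2-manifold whose induced metric $g=f^*(\cdot,\cdot)$ is positive definite. Let $\xi=(0,0,1)$ and let $d$ be the standard flat connection of $\mathbb{R}^3$ (componentwise differentiation). Since $\mathbb{R}^3=df(T_pM)\oplus\mathbb{R}\xi$, one can decompose $d_X(df(Y))=df(\nabla_XY)+h(X,Y)\xi$, where $\nabla$ is the Levi-Civita connection of $g$ and $h$ is a symmetric $(0,2)$-tensor called the second fundamental form. $f$ is $d$-totally geodesic if $h\equiv0$. An affine isometry of $\mathbb{R}^{0,2,1}$ is a map $p\mapsto Pp+b$ with $b\in\mathbb{R}^3$ and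 $P=\begin{pmatrix}T&0\\ (a\ \ b')&c\end{pmatrix}$, where $T\in O(2)$, $a,b',c\in\mathbb{R}$ and $c\neq0$. *)

(* Defs.v *)
From Stdlib Require Import Reals List.
Open Scope R_scope.

Definition R2 : Type := (R * R)%type.
Definition dist2 (p q : R2) : R :=
  Rmax (Rabs (fst p - fst q)) (Rabs (snd p - snd q)).
Definition open2 (U : R2 -> Prop) : Prop :=
  forall p, U p -> exists e, 0 < e /\ forall q, dist2 q p < e -> U q.
Definition cont2_on (U : R2 -> Prop) (F : R2 -> R) : Prop :=
  forall p, U p -> forall e, 0 < e -> exists d, 0 < d /\
    forall q, U q -> dist2 q p < d -> Rabs (F q - F p) < e.
Definition pd1_on (U : R2 -> Prop) (F G : R2 -> R) : Prop :=
  forall x y, U (x, y) -> derivable_pt_lim (fun t => F (t, y)) x (G (x, y)).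
Definition pd2_on (U : R2 -> Prop) (F G : R2 -> R) : Prop :=
  forall x y, U (x, y) -> derivable_pt_lim (fun t => F (x, t)) y (G (x, y)).

(** [derivs U F D]: D l is the iterated partial derivative of F indexed by l
    (false = d/du, true = d/dv; D (a :: l) = d_a (D l)); all exist and are
    continuous on U.  So D [a;b] = d_a d_b F. *)
Definition derivs (U : R2 -> Prop) (F : R2 -> R) (D : list bool -> R2 -> R) : Prop :=
  (forall p, U p -> D nil p = F p) /\
  forall l, pd1_on U (D l) (D (false :: l)) /\ pd2_on U (D l) (D (true :: l))
            /\ cont2_on U (D l).
Definition smooth_on (U : R2 -> Prop) (F : R2 -> R) : Prop := exists D, derivs U F D.

(** * Smooth 2-manifolds given by a smooth atlas (charts are parametrizations
      chart i : cdom i -> M).  Topology: final topology of the charts. *)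
Record surface := {
  pt : Type;
  cidx : Type;
  cdom : cidx -> R2 -> Prop;
  chart : cidx -> R2 -> pt;
  cdom_open : forall i, open2 (cdom i);
  chart_inj : forall i p q, cdom i p -> cdom i q -> chart i p = chart i q -> p = q;
  chart_cover : forall m, exists i p, cdom i p /\ chart i p = m;
  trans_open : forall i j,
    open2 (fun p => cdom i p /\ exists q, cdom j q /\ chart j q = chart i p);
  trans_smooth : forall i j, exists t1 t2 : R2 -> R,
    (forall p, cdom i p -> (exists q, cdom j q /\ chart j q = chart i p) ->
       cdom j (t1 p, t2 p) /\ chart j (t1 p, t2 p) = chart i p) /\
    smooth_on (fun p => cdom i p /\ exists q, cdom j q /\ chart j q = chart i p) t1 /\
    smooth_on (fun p => cdom i p /\ exists q, cdom j q /\ chart j q = chart i p) t2;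
  surf_hausdorff : forall m1 m2 : pt, m1 <> m2 -> exists O1 O2 : pt -> Prop,
    (forall i, open2 (fun p => cdom i p /\ O1 (chart i p))) /\
    (forall i, open2 (fun p => cdom i p /\ O2 (chart i p))) /\
    O1 m1 /\ O2 m2 /\ (forall m, ~ (O1 m /\ O2 m));
  surf_countable : exists e : nat -> cidx,
    forall m, exists n p, cdom (e n) p /\ chart (e n) p = m
}.

Definition sopen (S : surface) (O : pt S -> Prop) : Prop :=
  forall i, open2 (fun p => cdom S i p /\ O (chart S i p)).

Definition connected (S : surface) : Prop :=
  forall O1 O2 : pt S -> Prop, sopen S O1 -> sopen S O2 ->
    (forall m, O1 m \/ O2 m) -> (forall m, ~ (O1 m /\ O2 m)) ->
    (forall m, O1 m) \/ (forall m, O2 m).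

Definition smoothM (S : surface) (F : pt S -> R) : Prop :=
  forall i, smooth_on (cdom S i) (fun p => F (chart S i p)).

Record R3 := mk3 { x3 : R; y3 : R; z3 : R }.
Definition dist3 (p q : R3) : R :=
  Rmax (Rabs (x3 p - x3 q)) (Rmax (Rabs (y3 p - y3 q)) (Rabs (z3 p - z3 q))).

Definition chart_derivs (S : surface) (f : pt S -> R3) (i : cidx S)
  (D1 D2 D3 : list bool -> R2 -> R) : Prop :=
  derivs (cdom S i) (fun p => x3 (f (chart S i p))) D1 /\
  derivs (cdom S i) (fun p => y3 (f (chart S i p))) D2 /\
  derivs (cdom S i) (fun p => z3 (f (chart S i p))) D3.

(** induced metric g = f^*(dx^2+dy^2) in the chart, g(d_a, d_b) *)
Definition gcoef (D1 D2 : list bool -> R2 -> R) (a b : bool) (p : R2) : R :=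
  D1 (a :: nil) p * D1 (b :: nil) p + D2 (a :: nil) p * D2 (b :: nil) p.

Definition nondeg_immersion (S : surface) (f : pt S -> R3) : Prop :=
  (forall i, exists D1 D2 D3, chart_derivs S f i D1 D2 D3) /\
  forall i D1 D2 D3, chart_derivs S f i D1 D2 D3 -> forall p, cdom S i p ->
    forall s t : R, (s, t) <> (0, 0) ->
      mk3 (s * D1 (false :: nil) p + t * D1 (true :: nil) p)
          (s * D2 (false :: nil) p + t * D2 (true :: nil) p)
          (s * D3 (false :: nil) p + t * D3 (true :: nil) p) <> mk3 0 0 0 /\
      0 < s * s * gcoef D1 D2 false false p + 2 * s * t * gcoef D1 D2 false true p
          + t * t * gcoef D1 D2 true true p.

(** [hcoef_is ... a b c]: in the decomposition
      d_{d_a}(df(d_b)) = df(nabla_{d_a} d_b) + h(d_a,d_b) xi,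
    with xi = (0,0,1), the xi-component h(d_a,d_b) at p equals c. *)
Definition hcoef_is (D1 D2 D3 : list bool -> R2 -> R) (p : R2) (a b : bool) (c : R)
  : Prop :=
  exists c1 c2 : R,
    D1 (a :: b :: nil) p = c1 * D1 (false :: nil) p + c2 * D1 (true :: nil) p /\
    D2 (a :: b :: nil) p = c1 * D2 (false :: nil) p + c2 * D2 (true :: nil) p /\
    D3 (a :: b :: nil) p = c1 * D3 (false :: nil) p + c2 * D3 (true :: nil) p + c.

Definition h_eq_lam_g (S : surface) (f : pt S -> R3) (lam : pt S -> R) : Prop :=
  forall i D1 D2 D3, chart_derivs S f i D1 D2 D3 -> forall p, cdom S i p ->
    forall a b, hcoef_is D1 D2 D3 p a b (lam (chart S i p) * gcoef D1 D2 a b p).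

Definition d_totally_geodesic (S : surface) (f : pt S -> R3) : Prop :=
  forall i D1 D2 D3, chart_derivs S f i D1 D2 D3 -> forall p, cdom S i p ->
    forall a b, hcoef_is D1 D2 D3 p a b 0.

Definition image_open_in (S : surface) (P : R3 -> Prop) (f : pt S -> R3) : Prop :=
  (forall m, P (f m)) /\
  forall m, exists e, 0 < e /\ forall q, P q -> dist3 q (f m) < e -> exists m', f m' = q.

Definition paraboloid (lam A B C : R) (q : R3) : Prop :=
  z3 q = lam / 2 * (x3 q ^ 2 + y3 q ^ 2) + A * x3 q + B * y3 q + C.

Definition std_paraboloid (q : R3) : Prop := z3 q = x3 q ^ 2 + y3 q ^ 2.

Definition affine_isometry (T : R3 -> R3) : Prop :=
  exists t11 t12 t21 t22 a b' c b1 b2 b3 : R,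
    t11 * t11 + t21 * t21 = 1 /\ t12 * t12 + t22 * t22 = 1 /\
    t11 * t12 + t21 * t22 = 0 /\ c <> 0 /\
    forall p, T p = mk3 (t11 * x3 p + t12 * y3 p + b1)
                        (t21 * x3 p + t22 * y3 p + b2)
                        (a * x3 p + b' * y3 p + c * z3 p + b3).

(* Main.v *)
Require Import Defs.
From Stdlib Require Import Reals List Lra Psatz Classical.
From Coquelicot Require Coquelicot.
Open Scope R_scope.

Lemma Rabs_le_inv a b : Rabs a <= b -> - b <= a <= b.
Proof. unfold Rabs; destruct (Rcase_abs a); lra. Qed.
Lemma Rabs_lt_inv a b : Rabs a < b -> - b < a < b.
Proof. unfold Rabs; destruct (Rcase_abs a); lra. Qed.
Lemma Rabs_lt a b : - b < a < b -> Rabs a < b.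
Proof. unfold Rabs; destruct (Rcase_abs a); lra. Qed.

Lemma dist2_c1 p q : Rabs (fst q - fst p) <= dist2 q p.
Proof. unfold dist2; apply Rmax_l. Qed.
Lemma dist2_c2 p q : Rabs (snd q - snd p) <= dist2 q p.
Proof. unfold dist2; apply Rmax_r. Qed.
Lemma dist2_le p q r : Rabs (fst q - fst p) <= r -> Rabs (snd q - snd p) <= r -> dist2 q p <= r.
Proof. intros; unfold dist2; apply Rmax_lub; auto. Qed.
Lemma dist2_lt p q r : Rabs (fst q - fst p) < r -> Rabs (snd q - snd p) < r -> dist2 q p < r.
Proof. intros; unfold dist2; apply Rmax_lub_lt; auto. Qed.
Lemma dist2_ge0 p q : 0 <= dist2 q p.
Proof. pose proof (dist2_c1 p q); pose proof (Rabs_pos (fst q - fst p)); lra. Qed.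
Lemma dist2_sym p q : dist2 q p = dist2 p q.
Proof. unfold dist2; rewrite (Rabs_minus_sym (fst q)), (Rabs_minus_sym (snd q)); auto. Qed.
Lemma dist2_tri p q r : dist2 p r <= dist2 p q + dist2 q r.
Proof.
  apply dist2_le.
  - pose proof (dist2_c1 q p); pose proof (dist2_c1 r q).
    pose proof (Rabs_triang (fst p - fst q) (fst q - fst r)).
    replace (fst p - fst q + (fst q - fst r)) with (fst p - fst r) in * by ring. lra.
  - pose proof (dist2_c2 q p); pose proof (dist2_c2 r q).
    pose proof (Rabs_triang (snd p - snd q) (snd q - snd r)).
    replace (snd p - snd q + (snd q - snd r)) with (snd p - snd r) in * by ring. lra.
Qed.
Lemma dist2_self p : dist2 p p = 0.
Proof. unfold dist2; rewrite !Rminus_diag, Rabs_R0; apply Rmax_left; lra. Qed.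

Lemma mvt_bound (f f' : R -> R) a b M :
  (forall t, Rmin a b <= t <= Rmax a b -> derivable_pt_lim f t (f' t)) ->
  (forall t, Rmin a b <= t <= Rmax a b -> Rabs (f' t) <= M) ->
  Rabs (f b - f a) <= M * Rabs (b - a).
Proof.
  intros Hd HM.
  destruct (Rtotal_order a b) as [H|[H|H]].
  - destruct (MVT_cor2 f f' a b H) as [c [Hc1 Hc2]].
    + intros t Ht; apply Hd; rewrite Rmin_left, Rmax_right; lra.
    + rewrite Hc1, Rabs_mult. apply Rmult_le_compat_r. apply Rabs_pos.
      apply HM; rewrite Rmin_left, Rmax_right; lra.
  - subst. rewrite !Rminus_diag, Rabs_R0.
    assert (0 <= M). { assert (Hb : Rmin b b <= b <= Rmax b b).
      { unfold Rmin, Rmax; destruct (Rle_dec b b); lra. }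
      pose proof (HM b Hb). pose proof (Rabs_pos (f' b)). lra. }
    lra.
  - destruct (MVT_cor2 f f' b a H) as [c [Hc1 Hc2]].
    + intros t Ht; apply Hd; rewrite Rmin_right, Rmax_left; lra.
    + rewrite Rabs_minus_sym, Hc1, Rabs_mult, (Rabs_minus_sym b).
      apply Rmult_le_compat_r. apply Rabs_pos.
      apply HM; rewrite Rmin_right, Rmax_left; lra.
Qed.

Lemma Rmin_Rmax_box c r a b t :
  Rabs (a - c) <= r -> Rabs (b - c) <= r -> Rmin a b <= t <= Rmax a b -> Rabs (t - c) <= r.
Proof.
  intros Ha Hb Ht. apply Rabs_le. apply Rabs_le_inv in Ha. apply Rabs_le_inv in Hb.
  unfold Rmin, Rmax in Ht. destruct (Rle_dec a b); lra.
Qed.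

Lemma lip2 (phi phu phv : R2 -> R) (p : R2) r M q q' :
  (forall z, dist2 z p <= r ->
     derivable_pt_lim (fun t => phi (t, snd z)) (fst z) (phu z) /\
     derivable_pt_lim (fun t => phi (fst z, t)) (snd z) (phv z) /\
     Rabs (phu z) <= M /\ Rabs (phv z) <= M) ->
  dist2 q p <= r -> dist2 q' p <= r ->
  Rabs (phi q' - phi q) <= 2 * M * dist2 q' q.
Proof.
  intros H Hq Hq'. destruct q as [a b]; destruct q' as [a' b'].
  pose proof (dist2_c1 p (a,b)) as Ha; pose proof (dist2_c2 p (a,b)) as Hb.
  pose proof (dist2_c1 p (a',b')) as Ha'; pose proof (dist2_c2 p (a',b')) as Hb'.
  simpl in *.
  assert (E1 : Rabs (phi (a', b) - phi (a, b)) <= M * Rabs (a' - a)).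
  { apply (mvt_bound (fun t => phi (t, b)) (fun t => phu (t, b))).
    - intros t Ht. assert (dist2 (t,b) p <= r).
      { apply dist2_le; simpl. eapply Rmin_Rmax_box; [| |exact Ht]; lra. lra. }
      apply (H (t,b) H0).
    - intros t Ht. assert (dist2 (t,b) p <= r).
      { apply dist2_le; simpl. eapply Rmin_Rmax_box; [| |exact Ht]; lra. lra. }
      apply (H (t,b) H0). }
  assert (E2 : Rabs (phi (a', b') - phi (a', b)) <= M * Rabs (b' - b)).
  { apply (mvt_bound (fun t => phi (a', t)) (fun t => phv (a', t))).
    - intros t Ht. assert (dist2 (a',t) p <= r).
      { apply dist2_le; simpl. lra. eapply Rmin_Rmax_box; [| |exact Ht]; lra. }
      apply (H (a',t) H0).
    - intros t Ht. assert (dist2 (a',t) p <= r).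
      { apply dist2_le; simpl. lra. eapply Rmin_Rmax_box; [| |exact Ht]; lra. }
      apply (H (a',t) H0). }
  assert (0 <= M). { destruct (H p) as [_ [_ [HM _]]]. { rewrite dist2_self; pose proof (dist2_ge0 p (a,b)); lra. }
    pose proof (Rabs_pos (phu p)); lra. }
  pose proof (dist2_c1 (a,b) (a',b')); pose proof (dist2_c2 (a,b) (a',b')). simpl in *.
  pose proof (Rabs_triang (phi (a', b') - phi (a', b)) (phi (a', b) - phi (a, b))).
  replace (phi (a', b') - phi (a', b) + (phi (a', b) - phi (a, b))) with (phi (a', b') - phi (a, b)) in * by ring.
  assert (M * Rabs (a' - a) <= M * dist2 (a',b') (a,b)) by (apply Rmult_le_compat_l; lra).
  assert (M * Rabs (b' - b) <= M * dist2 (a',b') (a,b)) by (apply Rmult_le_compat_l; lra).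
  lra.
Qed.

Fixpoint itr (Phi : R2 -> R2) (p : R2) (n : nat) : R2 :=
  match n with O => p | S n => Phi (itr Phi p n) end.

Lemma dist2_zero q q' : (forall eps, 0 < eps -> dist2 q q' <= eps) -> q = q'.
Proof.
  intros H. assert (dist2 q q' = 0).
  { pose proof (dist2_ge0 q' q). destruct (Rle_lt_or_eq_dec 0 _ H0) as [h|h]; auto.
    specialize (H (dist2 q q' / 2) ltac:(lra)). lra. }
  pose proof (dist2_c1 q' q); pose proof (dist2_c2 q' q).
  pose proof (Rabs_pos (fst q - fst q')); pose proof (Rabs_pos (snd q - snd q')).
  assert (Rabs (fst q - fst q') = 0) by lra. assert (Rabs (snd q - snd q') = 0) by lra.
  assert (forall x, Rabs x = 0 -> x = 0) as Z.
  { intros x hx. destruct (Req_dec x 0); auto. exfalso; apply (Rabs_no_R0 x); auto. }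
  apply Z in H5; apply Z in H6. destruct q, q'; simpl in *. f_equal; lra.
Qed.

Lemma cv_dist (u1 u2 : nat -> R) l1 l2 eps : 0 < eps -> Un_cv u1 l1 -> Un_cv u2 l2 ->
  exists N, forall n, (n >= N)%nat -> dist2 (u1 n, u2 n) (l1, l2) < eps.
Proof.
  intros He H1 H2. destruct (H1 eps He) as [N1 HN1]. destruct (H2 eps He) as [N2 HN2].
  exists (max N1 N2). intros n Hn. apply dist2_lt; simpl.
  apply HN1; lia. apply HN2; lia.
Qed.

Lemma banach (p : R2) r (Phi : R2 -> R2) :
  0 <= r ->
  (forall q, dist2 q p <= r -> dist2 (Phi q) p <= r) ->
  (forall q q', dist2 q p <= r -> dist2 q' p <= r -> dist2 (Phi q) (Phi q') <= / 2 * dist2 q q') ->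
  exists q, dist2 q p <= r /\ Phi q = q.
Proof.
  intros Hr HK HL.
  set (it := itr Phi p).
  assert (inK : forall n, dist2 (it n) p <= r).
  { induction n; simpl. rewrite dist2_self; lra. apply HK; auto. }
  set (d0 := dist2 (it 1%nat) (it 0%nat)).
  assert (Hd0 : 0 <= d0) by apply dist2_ge0.
  assert (step : forall n, dist2 (it (S n)) (it n) <= (/2)^n * d0).
  { induction n. simpl. unfold d0; simpl; lra.
    change (dist2 (Phi (it (S n))) (Phi (it n)) <= (/2)^(S n) * d0).
    eapply Rle_trans. apply HL; auto. simpl. lra. }
  assert (tail : forall n k, dist2 (it (n + k)%nat) (it n) <= 2 * d0 * (/2)^n - 2 * d0 * (/2)^(n+k)).
  { intros n k. induction k.
    - rewrite Nat.add_0_r, dist2_self. lra.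
    - replace (n + S k)%nat with (S (n + k)) by lia.
      eapply Rle_trans. apply (dist2_tri _ (it (n+k)%nat)).
      pose proof (step (n+k)%nat). simpl pow at 2. lra. }
  assert (pos : forall n, 0 <= (/2)^n). { intros; apply pow_le; lra. }
  assert (cauchy : forall eps, 0 < eps -> exists N, forall n m, (n >= N)%nat -> (m >= N)%nat ->
             dist2 (it m) (it n) < eps).
  { intros eps He.
    assert (Hq : 0 < eps / (2 * d0 + 1)) by (apply Rdiv_lt_0_compat; lra).
    destruct (pow_lt_1_zero (/2) ltac:(rewrite Rabs_right; lra) _ Hq) as [N HN].
    exists N. intros n m Hn Hm.
    assert (forall a b, (a >= N)%nat -> (b >= a)%nat -> dist2 (it b) (it a) < eps).
    { intros a b Ha Hb. replace b with (a + (b - a))%nat by lia.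
      eapply Rle_lt_trans. apply tail. pose proof (pos (a + (b-a))%nat).
      specialize (HN a Ha). rewrite Rabs_right in HN by (apply Rle_ge; auto).
      assert (2 * d0 * (/2)^a <= 2 * d0 * (eps / (2 * d0 + 1))) by (apply Rmult_le_compat_l; lra).
      assert (2 * d0 * (eps / (2 * d0 + 1)) < eps).
      { assert (E : eps / (2*d0+1) * (2*d0+1) = eps) by (field; lra). nra. }
      pose proof (Rmult_le_pos _ _ (Rmult_le_pos 2 d0 ltac:(lra) Hd0) H). lra. }
    destruct (Nat.le_ge_cases n m). apply H; lia. rewrite dist2_sym; apply H; lia. }
  assert (C1 : Cauchy_crit (fun n => fst (it n))).
  { intros eps He. destruct (cauchy eps He) as [N HN]. exists N; intros n m Hn Hm.
    unfold Rdist. eapply Rle_lt_trans. apply dist2_c1. apply HN; auto. }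
  assert (C2 : Cauchy_crit (fun n => snd (it n))).
  { intros eps He. destruct (cauchy eps He) as [N HN]. exists N; intros n m Hn Hm.
    unfold Rdist. eapply Rle_lt_trans. apply dist2_c2. apply HN; auto. }
  destruct (R_complete _ C1) as [l1 Hl1]. destruct (R_complete _ C2) as [l2 Hl2].
  assert (cv : forall eps, 0 < eps -> exists N, forall n, (n >= N)%nat -> dist2 (it n) (l1, l2) < eps).
  { intros eps He. destruct (cv_dist _ _ _ _ eps He Hl1 Hl2) as [N HN]. exists N; intros n Hn.
    specialize (HN n Hn). destruct (it n); auto. }
  assert (lK : dist2 (l1, l2) p <= r).
  { destruct (Rle_or_lt (dist2 (l1,l2) p) r) as [h|h]; auto. exfalso.
    destruct (cv (dist2 (l1,l2) p - r) ltac:(lra)) as [N HN].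
    specialize (HN N (le_n _)). pose proof (dist2_tri (l1,l2) (it N) p).
    rewrite dist2_sym in HN. pose proof (inK N). lra. }
  exists (l1, l2). split; auto.
  apply dist2_zero. intros eps He.
  destruct (cv (eps/2) ltac:(lra)) as [N HN].
  pose proof (HN N (le_n _)). pose proof (HN (S N) ltac:(lia)).
  eapply Rle_trans. apply (dist2_tri _ (Phi (it N))).
  pose proof (HL (l1,l2) (it N) lK (inK N)). 
  change (Phi (it N)) with (it (S N)). rewrite (dist2_sym (it (S N))). rewrite (dist2_sym (it N) (l1,l2)) in H1. rewrite (dist2_sym (Phi (l1,l2))). change (Phi (it N)) with (it (S N)) in H1. lra.
Qed.

Lemma dpl_eq f x l l' : derivable_pt_lim f x l -> l = l' -> derivable_pt_lim f x l'.
Proof. intros H ->; auto. Qed.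
Lemma dpl_plus f g x a b : derivable_pt_lim f x a -> derivable_pt_lim g x b ->
  derivable_pt_lim (fun t => f t + g t) x (a + b).
Proof. intros; exact (derivable_pt_lim_plus f g x a b H H0). Qed.
Lemma dpl_minus f g x a b : derivable_pt_lim f x a -> derivable_pt_lim g x b ->
  derivable_pt_lim (fun t => f t - g t) x (a - b).
Proof. intros; exact (derivable_pt_lim_minus f g x a b H H0). Qed.
Lemma dpl_mult f g x a b : derivable_pt_lim f x a -> derivable_pt_lim g x b ->
  derivable_pt_lim (fun t => f t * g t) x (a * g x + f x * b).
Proof. intros; exact (derivable_pt_lim_mult f g x a b H H0). Qed.
Lemma dpl_const c x : derivable_pt_lim (fun _ => c) x 0.
Proof. exact (derivable_pt_lim_const c x). Qed.
Lemma dpl_id x : derivable_pt_lim (fun t => t) x 1.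
Proof. exact (derivable_pt_lim_id x). Qed.
Lemma dpl_scal c f x a : derivable_pt_lim f x a -> derivable_pt_lim (fun t => c * f t) x (c * a).
Proof. intros; exact (derivable_pt_lim_scal f c x a H). Qed.
Lemma dpl_div f g x a b : derivable_pt_lim f x a -> derivable_pt_lim g x b -> g x <> 0 ->
  derivable_pt_lim (fun t => f t / g t) x ((a * g x - b * f x) / (g x)²).
Proof. intros; exact (derivable_pt_lim_div f g x a b H H0 H1). Qed.

Lemma dpl_mc f c x a : derivable_pt_lim f x a -> derivable_pt_lim (fun t => f t - c) x a.
Proof. intros; eapply dpl_eq. apply dpl_minus; [exact H | apply dpl_const]. ring. Qed.

Lemma abs_comb a1 a2 d1 d2 eta : Rabs d1 < eta -> Rabs d2 < eta ->
  Rabs (a1 * d1 + a2 * d2) <= (Rabs a1 + Rabs a2) * eta.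
Proof.
  intros. eapply Rle_trans. apply Rabs_triang. rewrite !Rabs_mult.
  pose proof (Rabs_pos a1); pose proof (Rabs_pos a2).
  assert (Rabs a1 * Rabs d1 <= Rabs a1 * eta) by (apply Rmult_le_compat_l; lra).
  assert (Rabs a2 * Rabs d2 <= Rabs a2 * eta) by (apply Rmult_le_compat_l; lra). lra.
Qed.

Lemma local_surj (U : R2 -> Prop) (f1 f2 f1u f1v f2u f2v : R2 -> R) p :
  open2 U -> U p ->
  pd1_on U f1 f1u -> pd2_on U f1 f1v -> pd1_on U f2 f2u -> pd2_on U f2 f2v ->
  cont2_on U f1u -> cont2_on U f1v -> cont2_on U f2u -> cont2_on U f2v ->
  f1u p * f2v p - f1v p * f2u p <> 0 ->
  exists e, 0 < e /\ forall x y, Rabs (x - f1 p) < e -> Rabs (y - f2 p) < e ->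
    exists q, U q /\ f1 q = x /\ f2 q = y.
Proof.
  intros HU Up D1u D1v D2u D2v C1u C1v C2u C2v Hdet.
  set (det := f1u p * f2v p - f1v p * f2u p) in *.
  set (a11 := f2v p / det). set (a12 := - f1v p / det).
  set (a21 := - f2u p / det). set (a22 := f1u p / det).
  set (S := Rabs a11 + Rabs a12 + Rabs a21 + Rabs a22).
  assert (HS : 0 <= S) by (unfold S; pose proof (Rabs_pos a11); pose proof (Rabs_pos a12);
    pose proof (Rabs_pos a21); pose proof (Rabs_pos a22); lra).
  set (eta := / (4 * (S + 1))).
  assert (Heta : 0 < eta) by (unfold eta; apply Rinv_0_lt_compat; lra).
  assert (HSeta : S * eta <= /4).
  { unfold eta. apply (Rmult_le_reg_r (4 * (S+1))). lra.
    rewrite Rmult_assoc, Rinv_l by lra. lra. }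
  destruct (C1u p Up eta Heta) as [d1 [Hd1 K1]].
  destruct (C1v p Up eta Heta) as [d2 [Hd2 K2]].
  destruct (C2u p Up eta Heta) as [d3 [Hd3 K3]].
  destruct (C2v p Up eta Heta) as [d4 [Hd4 K4]].
  destruct (HU p Up) as [eU [HeU KU]].
  assert (Hrle : exists r, 0 < r /\ r < d1 /\ r < d2 /\ r < d3 /\ r < d4 /\ r < eU).
  { exists (Rmin (Rmin (Rmin d1 d2) (Rmin d3 d4)) eU / 2).
    pose proof (Rmin_l d1 d2); pose proof (Rmin_r d1 d2); pose proof (Rmin_l d3 d4); pose proof (Rmin_r d3 d4).
    pose proof (Rmin_l (Rmin d1 d2) (Rmin d3 d4)); pose proof (Rmin_r (Rmin d1 d2) (Rmin d3 d4)).
    pose proof (Rmin_l (Rmin (Rmin d1 d2) (Rmin d3 d4)) eU); pose proof (Rmin_r (Rmin (Rmin d1 d2) (Rmin d3 d4)) eU).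
    pose proof (Rmin_pos _ _ (Rmin_pos _ _ (Rmin_pos _ _ Hd1 Hd2) (Rmin_pos _ _ Hd3 Hd4)) HeU).
    lra. }
  destruct Hrle as [r [Hr Hrle]].
  destruct Hrle as [r1 [r2 [r3 [r4 r5]]]].
  assert (inU : forall z, dist2 z p <= r -> U z) by (intros; apply KU; lra).
  assert (E1 : a11 * f1u p + a12 * f2u p = 1) by (unfold a11, a12, det in *; field; auto).
  assert (E2 : a11 * f1v p + a12 * f2v p = 0) by (unfold a11, a12, det in *; field; auto).
  assert (E3 : a21 * f1u p + a22 * f2u p = 0) by (unfold a21, a22, det in *; field; auto).
  assert (E4 : a21 * f1v p + a22 * f2v p = 1) by (unfold a21, a22, det in *; field; auto).
  set (e := r / (2 * (S + 1))).
  assert (He : 0 < e) by (unfold e; apply Rdiv_lt_0_compat; lra).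
  exists e; split; auto. intros x y Hx Hy.
  set (phi1 := fun q : R2 => fst q - (a11 * (f1 q - x) + a12 * (f2 q - y))).
  set (phi2 := fun q : R2 => snd q - (a21 * (f1 q - x) + a22 * (f2 q - y))).
  set (Phi := fun q => (phi1 q, phi2 q)).
  assert (L1 : forall q q', dist2 q p <= r -> dist2 q' p <= r ->
            Rabs (phi1 q' - phi1 q) <= 2 * / 4 * dist2 q' q).
  { intros q q' Hq Hq'. apply (lip2 phi1 (fun z => 1 - (a11 * f1u z + a12 * f2u z))
       (fun z => - (a11 * f1v z + a12 * f2v z)) p r); auto.
    intros [z1 z2] Hz. pose proof (inU _ Hz) as Uz. simpl. repeat split.
    - unfold phi1; simpl. apply dpl_minus. apply dpl_id.
      apply dpl_plus; apply dpl_scal; apply dpl_mc.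
      apply D1u; auto. apply D2u; auto.
    - unfold phi1; simpl. eapply dpl_eq. apply dpl_minus. apply dpl_const.
      apply dpl_plus; apply dpl_scal; apply dpl_mc.
      apply D1v; auto. apply D2v; auto. ring.
    - replace (1 - (a11 * f1u (z1, z2) + a12 * f2u (z1, z2))) with
        (a11 * (f1u p - f1u (z1,z2)) + a12 * (f2u p - f2u (z1,z2))) by lra.
      eapply Rle_trans. apply abs_comb; rewrite Rabs_minus_sym; [apply K1 | apply K3]; auto; lra.
      unfold S in HSeta; pose proof (Rabs_pos a21); pose proof (Rabs_pos a22); nra.
    - replace (- (a11 * f1v (z1, z2) + a12 * f2v (z1, z2))) with
        (a11 * (f1v p - f1v (z1,z2)) + a12 * (f2v p - f2v (z1,z2))) by lra.
      eapply Rle_trans. apply abs_comb; rewrite Rabs_minus_sym; [apply K2 | apply K4]; auto; lra.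
      unfold S in HSeta; pose proof (Rabs_pos a21); pose proof (Rabs_pos a22); nra. }
  assert (L2 : forall q q', dist2 q p <= r -> dist2 q' p <= r ->
            Rabs (phi2 q' - phi2 q) <= 2 * / 4 * dist2 q' q).
  { intros q q' Hq Hq'. apply (lip2 phi2 (fun z => - (a21 * f1u z + a22 * f2u z))
       (fun z => 1 - (a21 * f1v z + a22 * f2v z)) p r); auto.
    intros [z1 z2] Hz. pose proof (inU _ Hz) as Uz. simpl. repeat split.
    - unfold phi2; simpl. eapply dpl_eq. apply dpl_minus. apply dpl_const.
      apply dpl_plus; apply dpl_scal; apply dpl_mc.
      apply D1u; auto. apply D2u; auto. ring.
    - unfold phi2; simpl. apply dpl_minus. apply dpl_id.
      apply dpl_plus; apply dpl_scal; apply dpl_mc.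
      apply D1v; auto. apply D2v; auto.
    - replace (- (a21 * f1u (z1, z2) + a22 * f2u (z1, z2))) with
        (a21 * (f1u p - f1u (z1,z2)) + a22 * (f2u p - f2u (z1,z2))) by lra.
      eapply Rle_trans. apply abs_comb; rewrite Rabs_minus_sym; [apply K1 | apply K3]; auto; lra.
      unfold S in HSeta; pose proof (Rabs_pos a11); pose proof (Rabs_pos a12); nra.
    - replace (1 - (a21 * f1v (z1, z2) + a22 * f2v (z1, z2))) with
        (a21 * (f1v p - f1v (z1,z2)) + a22 * (f2v p - f2v (z1,z2))) by lra.
      eapply Rle_trans. apply abs_comb; rewrite Rabs_minus_sym; [apply K2 | apply K4]; auto; lra.
      unfold S in HSeta; pose proof (Rabs_pos a11); pose proof (Rabs_pos a12); nra. }
  assert (LP : forall q q', dist2 q p <= r -> dist2 q' p <= r ->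
            dist2 (Phi q) (Phi q') <= / 2 * dist2 q q').
  { intros q q' Hq Hq'. apply dist2_le.
    - change (Rabs (phi1 q - phi1 q') <= / 2 * dist2 q q'). specialize (L1 q' q Hq' Hq). lra.
    - change (Rabs (phi2 q - phi2 q') <= / 2 * dist2 q q'). specialize (L2 q' q Hq' Hq). lra. }
  assert (P0 : dist2 (Phi p) p <= r / 2).
  { apply dist2_le; simpl; unfold phi1, phi2.
    - replace (fst p - (a11 * (f1 p - x) + a12 * (f2 p - y)) - fst p) with
        (a11 * (x - f1 p) + a12 * (y - f2 p)) by ring.
      eapply Rle_trans. apply abs_comb; eauto.
      unfold e. apply (Rmult_le_reg_r (2 * (S+1))). lra.
      unfold Rdiv. rewrite Rmult_assoc, Rmult_assoc, Rinv_l by lra.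
      unfold S. pose proof (Rabs_pos a21); pose proof (Rabs_pos a22);
      pose proof (Rabs_pos a11); pose proof (Rabs_pos a12). nra.
    - replace (snd p - (a21 * (f1 p - x) + a22 * (f2 p - y)) - snd p) with
        (a21 * (x - f1 p) + a22 * (y - f2 p)) by ring.
      eapply Rle_trans. apply abs_comb; eauto.
      unfold e. apply (Rmult_le_reg_r (2 * (S+1))). lra.
      unfold Rdiv. rewrite Rmult_assoc, Rmult_assoc, Rinv_l by lra.
      unfold S. pose proof (Rabs_pos a21); pose proof (Rabs_pos a22);
      pose proof (Rabs_pos a11); pose proof (Rabs_pos a12). nra. }
  destruct (banach p r Phi) as [q [Hq Fq]].
  - lra.
  - intros q Hq. eapply Rle_trans. apply (dist2_tri _ (Phi p)).
    pose proof (LP q p Hq ltac:(rewrite dist2_self; lra)). lra.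
  - auto.
  - exists q. split. apply inU; auto.
    unfold Phi in Fq. destruct q as [q1 q2]. injection Fq. unfold phi1, phi2; simpl. intros G2 G1.
    assert (G1' : a11 * (f1 (q1,q2) - x) + a12 * (f2 (q1,q2) - y) = 0) by lra.
    assert (G2' : a21 * (f1 (q1,q2) - x) + a22 * (f2 (q1,q2) - y) = 0) by lra.
    assert (Z1 : (f1 (q1,q2) - x) = 0).
    { replace (f1 (q1,q2) - x) with (f1u p * (a11 * (f1 (q1,q2) - x) + a12 * (f2 (q1,q2) - y))
         + f1v p * (a21 * (f1 (q1,q2) - x) + a22 * (f2 (q1,q2) - y))).
      rewrite G1', G2'; ring. unfold a11, a12, a21, a22, det in *. field; auto. }
    assert (Z2 : (f2 (q1,q2) - y) = 0).
    { replace (f2 (q1,q2) - y) with (f2u p * (a11 * (f1 (q1,q2) - x) + a12 * (f2 (q1,q2) - y))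
         + f2v p * (a21 * (f1 (q1,q2) - x) + a22 * (f2 (q1,q2) - y))).
      rewrite G1', G2'; ring. unfold a11, a12, a21, a22, det in *. field; auto. }
    split; lra.
Qed.

Definition locP (S : surface) (P : pt S -> Prop) (m : pt S) : Prop :=
  exists i p e, cdom S i p /\ chart S i p = m /\ 0 < e /\
    forall q, dist2 q p < e -> cdom S i q /\ P (chart S i q).

Lemma locP_sub S P m : locP S P m -> P m.
Proof.
  intros [i [p [e [H1 [H2 [H3 H4]]]]]]. subst. apply (H4 p). rewrite dist2_self; lra.
Qed.

Lemma min3_pos a b c : 0 < a -> 0 < b -> 0 < c -> exists d, 0 < d /\ d <= a /\ d <= b /\ d <= c.
Proof.
  intros. exists (Rmin a (Rmin b c)). pose proof (Rmin_l a (Rmin b c)); pose proof (Rmin_r a (Rmin b c)).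
  pose proof (Rmin_l b c); pose proof (Rmin_r b c). pose proof (Rmin_pos _ _ H (Rmin_pos _ _ H0 H1)). lra.
Qed.

Lemma locP_open S P : sopen S (locP S P).
Proof.
  intros j p' [Hj Hm].
  destruct Hm as [i [p [e [Hi [Heq [He Hq]]]]]].
  destruct (trans_smooth S j i) as [t1 [t2 [Ht [[E1 HE1] [E2 HE2]]]]].
  set (V := fun q => cdom S j q /\ exists r, cdom S i r /\ chart S i r = chart S j q) in *.
  assert (Vp : V p') by (split; auto; exists p; auto).
  destruct (Ht p' Hj (proj2 Vp)) as [Ti Tc].
  assert (Tp : (t1 p', t2 p') = p) by (apply (chart_inj S i); auto; congruence).
  destruct HE1 as [N1 HE1]. destruct (HE1 nil) as [_ [_ K1]].
  destruct HE2 as [N2 HE2]. destruct (HE2 nil) as [_ [_ K2]].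
  destruct (K1 p' Vp (e/2) ltac:(lra)) as [d1 [Hd1 Q1]].
  destruct (K2 p' Vp (e/2) ltac:(lra)) as [d2 [Hd2 Q2]].
  destruct (trans_open S j i p' Vp) as [eV [HeV QV]].
  destruct (min3_pos d1 d2 eV Hd1 Hd2 HeV) as [d [Hd [h1 [h2 h3]]]].
  exists d; split; auto. intros q Hqd.
  assert (Vq : V q) by (apply QV; lra).
  destruct (Ht q (proj1 Vq) (proj2 Vq)) as [Tqi Tqc].
  split. apply Vq.
  exists i, (t1 q, t2 q), (e/2). repeat split; auto. lra.
  all: assert (dist2 (t1 q, t2 q) p < e/2) by
  ( specialize (Q1 q Vq ltac:(lra)); specialize (Q2 q Vq ltac:(lra));
    rewrite N1 in Q1 by auto; rewrite N1 in Q1 by auto; rewrite N2 in Q2 by auto; rewrite N2 in Q2 by auto; rewrite <- Tp; apply dist2_lt; simpl; auto).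
  all: pose proof (dist2_tri q0 (t1 q, t2 q) p); apply Hq; lra.
Qed.

Lemma conn_family (S : surface) (T : Type) (O : T -> pt S -> Prop) :
  connected S -> (forall a, sopen S (O a)) ->
  (forall a b m, O a m -> O b m -> a = b) -> (forall m, exists a, O a m) ->
  forall m0 a0, O a0 m0 -> forall m, O a0 m.
Proof.
  intros Hc Ho Hd Hcov m0 a0 H0.
  destruct (Hc (O a0) (fun m => exists b, b <> a0 /\ O b m)) as [H|H].
  - apply Ho.
  - intros i p [Hp [b [Hb Ob]]]. destruct (Ho b i p (conj Hp Ob)) as [e [He Hq]].
    exists e; split; auto. intros q Hq'. destruct (Hq q Hq'); split; auto. exists b; auto.
  - intros m. destruct (Hcov m) as [a Ha].
    destruct (Classical_Prop.classic (a = a0)). subst; auto. right; exists a; auto.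
  - intros m [h1 [b [hb h2]]]. apply hb. apply (Hd b a0 m); auto.
  - auto.
  - destruct (H m0) as [b [hb h2]]. exfalso; apply hb; apply (Hd b a0 m0); auto.
Qed.

Module SW.
Import Coquelicot.Coquelicot.

Lemma schwarz2 (U : R2 -> Prop) (F Fu Fv Fuv Fvu : R2 -> R) (p : R2) :
  open2 U -> U p -> pd1_on U F Fu -> pd2_on U F Fv -> pd2_on U Fu Fvu -> pd1_on U Fv Fuv ->
  cont2_on U Fvu -> cont2_on U Fuv -> Fvu p = Fuv p.
Proof.
  intros HU Up H1 H2 H3 H4 C1 C2.
  destruct p as [x0 y0].
  destruct (HU _ Up) as [e [He Ke]].
  assert (inU : forall u v, Rabs (u - x0) < e -> Rabs (v - y0) < e -> U (u, v)).
  { intros; apply Ke; apply dist2_lt; simpl; auto. }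
  set (f := fun x y => F (x, y)).
  assert (A : forall u v, Rabs (u - x0) < e -> Rabs (v - y0) < e ->
     is_derive (fun t => f u t) v (Fv (u, v))).
  { intros. apply is_derive_Reals. apply H2. auto. }
  assert (B : forall u v, Rabs (u - x0) < e -> Rabs (v - y0) < e ->
     is_derive (fun t => f t v) u (Fu (u, v))).
  { intros. apply is_derive_Reals. apply H1. auto. }
  assert (He2 : 0 < e / 2) by lra.
  set (d := mkposreal _ He2).
  assert (DD1 : forall u v, Rabs (u - x0) < e/2 -> Rabs (v - y0) < e/2 ->
     is_derive (fun z => Derive (fun t => f z t) v) u (Fuv (u, v))).
  { intros u v hu hv. apply (is_derive_ext_loc (fun z => Fv (z, v))).
    exists d. intros z Hz. change (Rabs (z - u) < e/2) in Hz.
    symmetry. apply is_derive_unique. apply A. 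
    pose proof (Rabs_triang (z - u) (u - x0)). replace (z - u + (u - x0)) with (z - x0) in * by ring. lra. lra.
    apply is_derive_Reals. apply H4. apply inU; lra. }
  assert (DD2 : forall u v, Rabs (u - x0) < e/2 -> Rabs (v - y0) < e/2 ->
     is_derive (fun z => Derive (fun t => f t z) u) v (Fvu (u, v))).
  { intros u v hu hv. apply (is_derive_ext_loc (fun z => Fu (u, z))).
    exists d. intros z Hz. change (Rabs (z - v) < e/2) in Hz.
    symmetry. apply is_derive_unique. apply B. lra.
    pose proof (Rabs_triang (z - v) (v - y0)). replace (z - v + (v - y0)) with (z - y0) in * by ring. lra.
    apply is_derive_Reals. apply H3. apply inU; lra. }
  assert (h0 : Rabs (x0 - x0) < e / 2) by (rewrite Rminus_diag, Rabs_R0; lra).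
  assert (h0' : Rabs (y0 - y0) < e / 2) by (rewrite Rminus_diag, Rabs_R0; lra).
  pose proof (Schwarz f x0 y0) as S.
  rewrite <- (is_derive_unique _ _ _ (DD1 x0 y0 h0 h0')).
  rewrite <- (is_derive_unique _ _ _ (DD2 x0 y0 h0 h0')).
  symmetry; apply S.
  - exists d. intros u v hu hv. change (Rabs (u - x0) < e/2) in hu. change (Rabs (v - y0) < e/2) in hv.
    repeat split.
    + exists (Fu (u,v)). apply B; lra.
    + exists (Fv (u,v)). apply A; lra.
    + exists (Fuv (u,v)). apply DD1; auto.
    + exists (Fvu (u,v)). apply DD2; auto.
  - intros eps. destruct (C2 (x0,y0) Up eps (cond_pos eps)) as [d' [Hd' K]].
    assert (hm : 0 < Rmin d' (e/2)) by (apply Rmin_pos; lra).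
    exists (mkposreal _ hm). intros u v hu hv. simpl in hu, hv.
    pose proof (Rmin_l d' (e/2)); pose proof (Rmin_r d' (e/2)).
    replace (Derive (fun z : R => Derive (fun t : R => f z t) v) u) with (Fuv (u,v))
      by (symmetry; apply is_derive_unique; apply DD1; lra).
    replace (Derive (fun z : R => Derive (fun t : R => f z t) y0) x0) with (Fuv (x0,y0))
      by (symmetry; apply is_derive_unique; apply DD1; lra).
    apply K. apply inU; lra. apply dist2_lt; simpl; lra.
  - intros eps. destruct (C1 (x0,y0) Up eps (cond_pos eps)) as [d' [Hd' K]].
    assert (hm : 0 < Rmin d' (e/2)) by (apply Rmin_pos; lra).
    exists (mkposreal _ hm). intros u v hu hv. simpl in hu, hv.
    pose proof (Rmin_l d' (e/2)); pose proof (Rmin_r d' (e/2)).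
    replace (Derive (fun z : R => Derive (fun t : R => f t z) u) v) with (Fvu (u,v))
      by (symmetry; apply is_derive_unique; apply DD2; lra).
    replace (Derive (fun z : R => Derive (fun t : R => f t z) x0) y0) with (Fvu (x0,y0))
      by (symmetry; apply is_derive_unique; apply DD2; lra).
    apply K. apply inU; lra. apply dist2_lt; simpl; lra.
Qed.
End SW.

Definition dfam (U : R2 -> Prop) (D : list bool -> R2 -> R) : Prop :=
  forall l, pd1_on U (D l) (D (false :: l)) /\ pd2_on U (D l) (D (true :: l)) /\ cont2_on U (D l).

Definition dir (a : bool) (p : R2) (t : R) : R2 := if a then (fst p, t) else (t, snd p).
Definition crd (a : bool) (p : R2) : R := if a then snd p else fst p.

Lemma dir_crd a p : dir a p (crd a p) = p.
Proof. destruct a, p; reflexivity. Qed.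

Lemma pd_dir U D l a p : dfam U D -> U p ->
  derivable_pt_lim (fun t => D l (dir a p t)) (crd a p) (D (a :: l) p).
Proof.
  intros H Up. destruct p as [x y]; destruct a; simpl.
  - apply (proj1 (proj2 (H l))); auto.
  - apply (proj1 (H l)); auto.
Qed.

Lemma dir_near U a p : open2 U -> U p -> exists d, 0 < d /\ forall t, Rabs (t - crd a p) < d -> U (dir a p t).
Proof.
  intros HU Up. destruct (HU p Up) as [e [He K]]. exists e; split; auto.
  intros t Ht. apply K. destruct p as [x y]; destruct a; simpl in *; apply dist2_lt; simpl; auto;
  rewrite Rminus_diag, Rabs_R0; lra.
Qed.

Lemma dpl_loc f g x l : derivable_pt_lim f x l ->
  (exists d, 0 < d /\ forall t, Rabs (t - x) < d -> f t = g t) -> derivable_pt_lim g x l.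
Proof.
  intros H [d [Hd E]] eps He. destruct (H eps He) as [del Hdel].
  assert (hm : 0 < Rmin del d) by (apply Rmin_pos; [apply cond_pos | lra]).
  exists (mkposreal _ hm). intros h Hh0 Hh. simpl in Hh.
  pose proof (Rmin_l del d); pose proof (Rmin_r del d).
  rewrite <- (E (x + h)), <- (E x). apply Hdel; auto; lra.
  rewrite Rminus_diag, Rabs_R0; lra.
  replace (x + h - x) with h by ring; lra.
Qed.

Lemma cont2_plus U f g : cont2_on U f -> cont2_on U g -> cont2_on U (fun q => f q + g q).
Proof.
  intros Hf Hg p Up e He. destruct (Hf p Up (e/2) ltac:(lra)) as [d1 [Hd1 K1]].
  destruct (Hg p Up (e/2) ltac:(lra)) as [d2 [Hd2 K2]].
  exists (Rmin d1 d2); split. apply Rmin_pos; auto. intros q Uq Hq.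
  pose proof (Rmin_l d1 d2); pose proof (Rmin_r d1 d2).
  specialize (K1 q Uq ltac:(lra)); specialize (K2 q Uq ltac:(lra)).
  replace (f q + g q - (f p + g p)) with ((f q - f p) + (g q - g p)) by ring.
  pose proof (Rabs_triang (f q - f p) (g q - g p)). lra.
Qed.

Lemma cont2_mult U f g : cont2_on U f -> cont2_on U g -> cont2_on U (fun q => f q * g q).
Proof.
  intros Hf Hg p Up e He.
  set (A := Rabs (f p) + 1). set (B := Rabs (g p) + 1).
  assert (HA : 0 < A) by (unfold A; pose proof (Rabs_pos (f p)); lra).
  assert (HB : 0 < B) by (unfold B; pose proof (Rabs_pos (g p)); lra).
  destruct (Hf p Up (Rmin 1 (e / (2 * B))) ltac:(apply Rmin_pos; [lra | apply Rdiv_lt_0_compat; lra]))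
    as [d1 [Hd1 K1]].
  destruct (Hg p Up (e / (2 * A)) ltac:(apply Rdiv_lt_0_compat; lra)) as [d2 [Hd2 K2]].
  exists (Rmin d1 d2); split. apply Rmin_pos; auto. intros q Uq Hq.
  pose proof (Rmin_l d1 d2); pose proof (Rmin_r d1 d2).
  specialize (K1 q Uq ltac:(lra)); specialize (K2 q Uq ltac:(lra)).
  pose proof (Rmin_l 1 (e / (2 * B))); pose proof (Rmin_r 1 (e / (2 * B))).
  replace (f q * g q - f p * g p) with (f q * (g q - g p) + g p * (f q - f p)) by ring.
  eapply Rle_lt_trans. apply Rabs_triang. rewrite !Rabs_mult.
  assert (Rabs (f q) <= A).
  { unfold A. pose proof (Rabs_triang (f q - f p) (f p)) as T. replace (f q - f p + f p) with (f q) in T by ring. lra. }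
  assert (Rabs (f q) * Rabs (g q - g p) <= A * (e / (2 * A))).
  { apply Rmult_le_compat; try apply Rabs_pos; lra. }
  assert (Rabs (g p) * Rabs (f q - f p) <= B * (e / (2 * B))).
  { apply Rmult_le_compat; try apply Rabs_pos; [unfold B; lra | lra]. }
  assert (A * (e / (2 * A)) = e / 2) by (field; lra).
  assert (B * (e / (2 * B)) = e / 2) by (field; lra).
  assert (X : Rabs (g p) * Rabs (f q - f p) < e / 2).
  { destruct (Req_dec (Rabs (g p)) 0) as [z|z].
    - rewrite z. lra.
    - assert (0 < Rabs (g p)) by (pose proof (Rabs_pos (g p)); lra).
      apply Rle_lt_trans with (Rabs (g p) * (e / (2 * B))).
      apply Rmult_le_compat_l; lra. 
      assert (Rabs (g p) * (e / (2*B)) < B * (e / (2*B))).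
      { apply Rmult_lt_compat_r. apply Rdiv_lt_0_compat; lra. unfold B; lra. }
      lra. }
  lra.
Qed.

Definition det (D1 D2 : list bool -> R2 -> R) (p : R2) : R :=
  D1 (false :: nil) p * D2 (true :: nil) p - D1 (true :: nil) p * D2 (false :: nil) p.

Lemma indep1 D1 D2 p al be : det D1 D2 p <> 0 ->
  al * D1 (false :: nil) p + be * D2 (false :: nil) p = 0 ->
  al * D1 (true :: nil) p + be * D2 (true :: nil) p = 0 -> al = 0 /\ be = 0.
Proof.
  unfold det. intros Hd H1 H2. split.
  - assert (al * (D1 (false :: nil) p * D2 (true :: nil) p - D1 (true :: nil) p * D2 (false :: nil) p) = 0).
    { replace (al * (D1 (false :: nil) p * D2 (true :: nil) p - D1 (true :: nil) p * D2 (false :: nil) p))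
        with (D2 (true :: nil) p * (al * D1 (false :: nil) p + be * D2 (false :: nil) p)
              - D2 (false :: nil) p * (al * D1 (true :: nil) p + be * D2 (true :: nil) p)) by ring.
      rewrite H1, H2; ring. }
    destruct (Rmult_integral _ _ H); auto; contradiction.
  - assert (be * (D1 (false :: nil) p * D2 (true :: nil) p - D1 (true :: nil) p * D2 (false :: nil) p) = 0).
    { replace (be * (D1 (false :: nil) p * D2 (true :: nil) p - D1 (true :: nil) p * D2 (false :: nil) p))
        with (D1 (false :: nil) p * (al * D1 (true :: nil) p + be * D2 (true :: nil) p)
              - D1 (true :: nil) p * (al * D1 (false :: nil) p + be * D2 (false :: nil) p)) by ring.
      rewrite H1, H2; ring. }
    destruct (Rmult_integral _ _ H); auto; contradiction.
Qed.

Lemma indep2 D1 D2 p x y : det D1 D2 p <> 0 ->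
  x * D1 (false :: nil) p + y * D1 (true :: nil) p = 0 ->
  x * D2 (false :: nil) p + y * D2 (true :: nil) p = 0 -> x = 0 /\ y = 0.
Proof.
  unfold det. intros Hd H1 H2. split.
  - assert (x * (D1 (false :: nil) p * D2 (true :: nil) p - D1 (true :: nil) p * D2 (false :: nil) p) = 0).
    { replace (x * (D1 (false :: nil) p * D2 (true :: nil) p - D1 (true :: nil) p * D2 (false :: nil) p))
        with (D2 (true :: nil) p * (x * D1 (false :: nil) p + y * D1 (true :: nil) p)
              - D1 (true :: nil) p * (x * D2 (false :: nil) p + y * D2 (true :: nil) p)) by ring.
      rewrite H1, H2; ring. }
    destruct (Rmult_integral _ _ H); auto; contradiction.
  - assert (y * (D1 (false :: nil) p * D2 (true :: nil) p - D1 (true :: nil) p * D2 (false :: nil) p) = 0).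
    { replace (y * (D1 (false :: nil) p * D2 (true :: nil) p - D1 (true :: nil) p * D2 (false :: nil) p))
        with (D1 (false :: nil) p * (x * D2 (false :: nil) p + y * D2 (true :: nil) p)
              - D2 (false :: nil) p * (x * D1 (false :: nil) p + y * D1 (true :: nil) p)) by ring.
      rewrite H1, H2; ring. }
    destruct (Rmult_integral _ _ H); auto; contradiction.
Qed.

Definition Pf (D1 D2 D3 : list bool -> R2 -> R) (q : R2) : R :=
  (D3 (false :: nil) q * D2 (true :: nil) q - D3 (true :: nil) q * D2 (false :: nil) q) / det D1 D2 q.
Definition Qf (D1 D2 D3 : list bool -> R2 -> R) (q : R2) : R :=
  (D1 (false :: nil) q * D3 (true :: nil) q - D1 (true :: nil) q * D3 (false :: nil) q) / det D1 D2 q.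

Lemma ident D1 D2 D3 q b : det D1 D2 q <> 0 ->
  D3 (b :: nil) q = Pf D1 D2 D3 q * D1 (b :: nil) q + Qf D1 D2 D3 q * D2 (b :: nil) q.
Proof. intros H; unfold Pf, Qf; unfold det in *; destruct b; field; auto. Qed.

Section Loc.
Variables (U : R2 -> Prop) (D1 D2 D3 L : list bool -> R2 -> R).
Hypotheses (HU : open2 U) (F1 : dfam U D1) (F2 : dfam U D2) (F3 : dfam U D3)
  (Hdet : forall p, U p -> det D1 D2 p <> 0).

Lemma P_ex p a : U p -> exists l, derivable_pt_lim (fun t => Pf D1 D2 D3 (dir a p t)) (crd a p) l.
Proof.
  intros Up. eexists. unfold Pf, det. apply dpl_div.
  apply dpl_minus; apply dpl_mult; apply (pd_dir U); auto.
  apply dpl_minus; apply dpl_mult; apply (pd_dir U); auto.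
  cbv beta. rewrite dir_crd. apply Hdet; auto.
Qed.

Lemma Q_ex p a : U p -> exists l, derivable_pt_lim (fun t => Qf D1 D2 D3 (dir a p t)) (crd a p) l.
Proof.
  intros Up. eexists. unfold Qf, det. apply dpl_div.
  apply dpl_minus; apply dpl_mult; apply (pd_dir U); auto.
  apply dpl_minus; apply dpl_mult; apply (pd_dir U); auto.
  cbv beta. rewrite dir_crd. apply Hdet; auto.
Qed.

Hypothesis Hh : forall p, U p -> forall a b,
  hcoef_is D1 D2 D3 p a b (L nil p * gcoef D1 D2 a b p).

Lemma PQ_deriv p a : U p ->
  derivable_pt_lim (fun t => Pf D1 D2 D3 (dir a p t)) (crd a p) (L nil p * D1 (a :: nil) p) /\
  derivable_pt_lim (fun t => Qf D1 D2 D3 (dir a p t)) (crd a p) (L nil p * D2 (a :: nil) p).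
Proof.
  intros Up. destruct (P_ex p a Up) as [lP HP]. destruct (Q_ex p a Up) as [lQ HQ].
  destruct (dir_near U a p HU Up) as [d [Hd Kd]].
  assert (EQ : forall b, D3 (a :: b :: nil) p =
     lP * D1 (b :: nil) p + Pf D1 D2 D3 p * D1 (a :: b :: nil) p +
     (lQ * D2 (b :: nil) p + Qf D1 D2 D3 p * D2 (a :: b :: nil) p)).
  { intros b. apply (uniqueness_limite (fun t => D3 (b :: nil) (dir a p t)) (crd a p)).
    apply (pd_dir U); auto.
    apply (dpl_loc (fun t => Pf D1 D2 D3 (dir a p t) * D1 (b :: nil) (dir a p t)
                       + Qf D1 D2 D3 (dir a p t) * D2 (b :: nil) (dir a p t))).
    - pose proof (dpl_plus _ _ _ _ _ (dpl_mult _ _ _ _ _ HP (pd_dir U D1 (b :: nil) a p F1 Up))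
                               (dpl_mult _ _ _ _ _ HQ (pd_dir U D2 (b :: nil) a p F2 Up))) as X.
      cbv beta in X. rewrite dir_crd in X. exact X.
    - exists d; split; auto. intros t Ht. symmetry. apply ident. apply Hdet. apply Kd; auto. }
  assert (G : forall b, (lP - L nil p * D1 (a :: nil) p) * D1 (b :: nil) p +
                        (lQ - L nil p * D2 (a :: nil) p) * D2 (b :: nil) p = 0).
  { intros b. specialize (EQ b). destruct (Hh p Up a b) as [c1 [c2 [E1 [E2 E3]]]].
    rewrite E1, E2, E3 in EQ. rewrite (ident D1 D2 D3 p false (Hdet p Up)) in EQ.
    rewrite (ident D1 D2 D3 p true (Hdet p Up)) in EQ. unfold gcoef in EQ. lra. }
  destruct (indep1 D1 D2 p _ _ (Hdet p Up) (G false) (G true)) as [Z1 Z2].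
  split; eapply dpl_eq; eauto; lra.
Qed.

Hypothesis FL : dfam U L.

Lemma lam_loc p : U p -> L (false :: nil) p = 0 /\ L (true :: nil) p = 0.
Proof.
  intros Up.
  assert (S1 : forall (Dk : list bool -> R2 -> R) (Pk : R2 -> R), dfam U Dk ->
     (forall q a, U q -> derivable_pt_lim (fun t => Pk (dir a q t)) (crd a q) (L nil q * Dk (a :: nil) q)) ->
     L (true :: nil) p * Dk (false :: nil) p - L (false :: nil) p * Dk (true :: nil) p = 0).
  { intros Dk Pk Fk HPk.
    assert (SP := SW.schwarz2 U Pk (fun q => L nil q * Dk (false :: nil) q) (fun q => L nil q * Dk (true :: nil) q)
      (fun q => L (false :: nil) q * Dk (true :: nil) q + L nil q * Dk (false :: true :: nil) q)
      (fun q => L (true :: nil) q * Dk (false :: nil) q + L nil q * Dk (true :: false :: nil) q) p HU Up).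
    assert (SD := SW.schwarz2 U (Dk nil) (Dk (false :: nil)) (Dk (true :: nil))
      (Dk (false :: true :: nil)) (Dk (true :: false :: nil)) p HU Up).
    cbv beta in SP. rewrite SD in SP.
    - enough (L (true :: nil) p * Dk (false :: nil) p + L nil p * Dk (false :: true :: nil) p =
              L (false :: nil) p * Dk (true :: nil) p + L nil p * Dk (false :: true :: nil) p) by lra.
      apply SP.
      + intros x y Uq. apply (HPk (x,y) false Uq).
      + intros x y Uq. apply (HPk (x,y) true Uq).
      + intros x y Uq. cbv beta. eapply dpl_eq. apply dpl_mult.
        apply (proj1 (proj2 (FL nil))); auto. apply (proj1 (proj2 (Fk (false :: nil)))); auto. cbv beta; ring.
      + intros x y Uq. cbv beta. eapply dpl_eq. apply dpl_mult.
        apply (proj1 (FL nil)); auto. apply (proj1 (Fk (true :: nil))); auto. cbv beta; ring.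
      + apply cont2_plus; apply cont2_mult; first [apply (proj2 (proj2 (FL _))) | apply (proj2 (proj2 (Fk _)))].
      + apply cont2_plus; apply cont2_mult; first [apply (proj2 (proj2 (FL _))) | apply (proj2 (proj2 (Fk _)))].
    - apply (proj1 (Fk nil)).
    - apply (proj1 (proj2 (Fk nil))).
    - apply (proj1 (proj2 (Fk (false :: nil)))).
    - apply (proj1 (Fk (true :: nil))).
    - apply (proj2 (proj2 (Fk _))).
    - apply (proj2 (proj2 (Fk _))). }
  assert (A1 := S1 D1 (Pf D1 D2 D3) F1 (fun q a Uq => proj1 (PQ_deriv q a Uq))).
  assert (A2 := S1 D2 (Qf D1 D2 D3) F2 (fun q a Uq => proj2 (PQ_deriv q a Uq))).
  destruct (indep2 D1 D2 p (L (true :: nil) p) (- L (false :: nil) p) (Hdet p Up)) as [Z1 Z2]; try lra.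
Qed.
End Loc.

Lemma const_ball (phi : R2 -> R) p e :
  (forall z, dist2 z p < e -> forall a, derivable_pt_lim (fun t => phi (dir a z t)) (crd a z) 0) ->
  forall q, dist2 q p < e -> phi q = phi p.
Proof.
  intros H q Hq.
  assert (X := lip2 phi (fun _ => 0) (fun _ => 0) p (dist2 q p) 0 p q).
  assert (Rabs (phi q - phi p) <= 0).
  { replace 0 with (2 * 0 * dist2 q p) by ring. apply X.
    - intros z Hz. repeat split. exact (H z ltac:(lra) false). exact (H z ltac:(lra) true).
      rewrite Rabs_R0; lra. rewrite Rabs_R0; lra.
    - rewrite dist2_self. apply dist2_ge0.
    - lra. }
  pose proof (Rabs_pos (phi q - phi p)).
  assert (Rabs (phi q - phi p) = 0) by lra.
  destruct (Req_dec (phi q - phi p) 0). lra. exfalso; apply (Rabs_no_R0 _ H3 H2).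
Qed.

Section Loc2.
Variables (U : R2 -> Prop) (D1 D2 D3 L : list bool -> R2 -> R) (c : R).
Hypotheses (HU : open2 U) (F1 : dfam U D1) (F2 : dfam U D2) (F3 : dfam U D3)
  (Hdet : forall p, U p -> det D1 D2 p <> 0)
  (Hh : forall p, U p -> forall a b, hcoef_is D1 D2 D3 p a b (L nil p * gcoef D1 D2 a b p))
  (Hc : forall p, U p -> L nil p = c).

Lemma para_loc p : U p -> exists A B C e, 0 < e /\ forall q, dist2 q p < e -> U q /\
  D3 nil q = c / 2 * (D1 nil q ^ 2 + D2 nil q ^ 2) + A * D1 nil q + B * D2 nil q + C.
Proof.
  intros Up. destruct (HU p Up) as [e [He Ke]].
  set (A := Pf D1 D2 D3 p - c * D1 nil p).
  set (B := Qf D1 D2 D3 p - c * D2 nil p).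
  assert (PA : forall q, dist2 q p < e -> Pf D1 D2 D3 q - c * D1 nil q = A).
  { intros q Hq. apply (const_ball (fun q => Pf D1 D2 D3 q - c * D1 nil q) p e); auto.
    intros z Hz a. pose proof (Ke z Hz) as Uz.
    eapply dpl_eq. apply dpl_minus. apply (proj1 (PQ_deriv U D1 D2 D3 L HU F1 F2 F3 Hdet Hh z a Uz)).
    apply dpl_scal. apply (pd_dir U); auto. rewrite Hc; auto; ring. }
  assert (QB : forall q, dist2 q p < e -> Qf D1 D2 D3 q - c * D2 nil q = B).
  { intros q Hq. apply (const_ball (fun q => Qf D1 D2 D3 q - c * D2 nil q) p e); auto.
    intros z Hz a. pose proof (Ke z Hz) as Uz.
    eapply dpl_eq. apply dpl_minus. apply (proj2 (PQ_deriv U D1 D2 D3 L HU F1 F2 F3 Hdet Hh z a Uz)).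
    apply dpl_scal. apply (pd_dir U); auto. rewrite Hc; auto; ring. }
  set (phi := fun q => D3 nil q - (c / 2 * (D1 nil q * D1 nil q + D2 nil q * D2 nil q) + A * D1 nil q + B * D2 nil q)).
  assert (PC : forall q, dist2 q p < e -> phi q = phi p).
  { apply const_ball. intros z Hz a. pose proof (Ke z Hz) as Uz.
    unfold phi. eapply dpl_eq. apply dpl_minus. apply (pd_dir U); auto.
    apply dpl_plus. apply dpl_plus. apply dpl_scal. apply dpl_plus; apply dpl_mult; apply (pd_dir U); auto.
    apply dpl_scal; apply (pd_dir U); auto. apply dpl_scal; apply (pd_dir U); auto.
    cbv beta. rewrite !dir_crd. rewrite (ident D1 D2 D3 z a (Hdet z Uz)).
    specialize (PA z Hz). specialize (QB z Hz). 
    replace (Pf D1 D2 D3 z) with (A + c * D1 nil z) by lra.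
    replace (Qf D1 D2 D3 z) with (B + c * D2 nil z) by lra. field. }
  exists A, B, (phi p), e. split; auto. intros q Hq. split. apply Ke; auto.
  specialize (PC q Hq). unfold phi in PC at 1. lra.
Qed.
End Loc2.

Lemma det_nz D1 D2 p :
  (forall s t : R, (s, t) <> (0, 0) ->
      0 < s * s * gcoef D1 D2 false false p + 2 * s * t * gcoef D1 D2 false true p
          + t * t * gcoef D1 D2 true true p) -> det D1 D2 p <> 0.
Proof.
  unfold det, gcoef. intros H Hd.
  set (a := D1 (false :: nil) p) in *. set (b := D1 (true :: nil) p) in *.
  set (c := D2 (false :: nil) p) in *. set (d := D2 (true :: nil) p) in *.
  assert (Q : forall s t, (s,t) <> (0,0) -> 0 < (s * a + t * b) ^ 2 + (s * c + t * d) ^ 2).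
  { intros s t hst. specialize (H s t hst). nra. }
  destruct (Req_dec a 0) as [ha|ha]; destruct (Req_dec b 0) as [hb|hb].
  - destruct (Req_dec c 0) as [hc|hc]; destruct (Req_dec d 0) as [hd|hd].
    + specialize (Q 1 0 ltac:(intro h; injection h; lra)). rewrite ha, hb, hc, hd in Q. lra.
    + specialize (Q d (-c) ltac:(intro h; injection h; lra)). rewrite ha, hb in Q. nra.
    + specialize (Q d (-c) ltac:(intro h; injection h; lra)). rewrite ha, hb in Q. nra.
    + specialize (Q d (-c) ltac:(intro h; injection h; lra)). rewrite ha, hb in Q. nra.
  - specialize (Q b (-a) ltac:(intro h; injection h; lra)).
    assert (b * c + - a * d = 0) by lra. nra.
  - specialize (Q b (-a) ltac:(intro h; injection h; lra)).
    assert (b * c + - a * d = 0) by lra. nra.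
  - specialize (Q b (-a) ltac:(intro h; injection h; lra)).
    assert (b * c + - a * d = 0) by lra. nra.
Qed.

Section Main.
Variables (S : surface) (f : pt S -> R3) (lam : pt S -> R).
Hypotheses (ND : nondeg_immersion S f) (SM : smoothM S lam) (HE : h_eq_lam_g S f lam).

Lemma chart_setup i : exists D1 D2 D3 L,
  chart_derivs S f i D1 D2 D3 /\ derivs (cdom S i) (fun p => lam (chart S i p)) L /\
  dfam (cdom S i) D1 /\ dfam (cdom S i) D2 /\ dfam (cdom S i) D3 /\ dfam (cdom S i) L /\
  (forall p, cdom S i p -> det D1 D2 p <> 0) /\
  (forall p, cdom S i p -> forall a b, hcoef_is D1 D2 D3 p a b (L nil p * gcoef D1 D2 a b p)).
Proof.
  destruct (proj1 ND i) as [D1 [D2 [D3 CD]]]. destruct (SM i) as [L HL].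
  exists D1, D2, D3, L. pose proof CD as [[_ G1] [[_ G2] [_ G3]]].
  split; [auto|]. split; [exact HL|]. split; [exact G1|]. split; [exact G2|]. split; [exact G3|].
  split; [exact (proj2 HL)|]. split.
  - intros p Up. apply det_nz. intros s t hst. apply (proj2 ND i D1 D2 D3 CD p Up s t hst).
  - intros p Up a b. rewrite (proj1 HL p Up). apply HE; auto.
Qed.

Lemma lam_locconst m : locP S (fun m' => lam m' = lam m) m.
Proof.
  destruct (chart_cover S m) as [i [p [Up Em]]].
  destruct (chart_setup i) as [D1 [D2 [D3 [L [CD [HL [F1 [F2 [F3 [FL [Hdet Hh]]]]]]]]]]].
  destruct (cdom_open S i p Up) as [e [He Ke]].
  exists i, p, e. split; [auto|]. split; [auto|]. split; [auto|]. intros q Hq. split.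
  - apply Ke; auto.
  - rewrite <- Em. rewrite <- (proj1 HL q (Ke q Hq)), <- (proj1 HL p Up).
    apply (const_ball (L nil) p e); auto.
    intros z Hz a. pose proof (Ke z Hz) as Uz.
    destruct (lam_loc (cdom S i) D1 D2 D3 L (cdom_open S i) F1 F2 F3 Hdet Hh FL z Uz) as [Z1 Z2].
    pose proof (pd_dir (cdom S i) L nil a z FL Uz). destruct a; [rewrite Z2 in H | rewrite Z1 in H]; auto.
Qed.

Lemma surj_graph m : exists e, 0 < e /\ forall x y, Rabs (x - x3 (f m)) < e -> Rabs (y - y3 (f m)) < e ->
  exists m', x3 (f m') = x /\ y3 (f m') = y.
Proof.
  destruct (chart_cover S m) as [i [p [Up Em]]].
  destruct (chart_setup i) as [D1 [D2 [D3 [L [CD [HL [F1 [F2 [F3 [FL [Hdet Hh]]]]]]]]]]].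
  destruct CD as [[N1 _] [[N2 _] _]].
  destruct (local_surj (cdom S i) (D1 nil) (D2 nil) (D1 (false :: nil)) (D1 (true :: nil))
     (D2 (false :: nil)) (D2 (true :: nil)) p (cdom_open S i) Up) as [e [He K]];
    try apply (F1 nil); try apply (F2 nil); try apply (F1 (false :: nil)); try apply (F1 (true :: nil));
    try apply (F2 (false :: nil)); try apply (F2 (true :: nil)).
  - apply (Hdet p Up).
  - exists e; split; auto. intros x y Hx Hy.
    rewrite <- Em, <- (N1 p Up) in Hx. rewrite <- Em, <- (N2 p Up) in Hy.
    destruct (K x y Hx Hy) as [q [Uq [Q1 Q2]]].
    exists (chart S i q). rewrite <- (N1 q Uq), <- (N2 q Uq). auto.
Qed.
End Main.

Lemma dist_dir a p t e : Rabs (t - crd a p) < e -> 0 < e -> dist2 (dir a p t) p < e.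
Proof.
  intros H He. destruct a, p; simpl in *; apply dist2_lt; simpl; auto; rewrite Rminus_diag, Rabs_R0; lra.
Qed.

Lemma dist3_x p q : Rabs (x3 p - x3 q) <= dist3 p q.
Proof. unfold dist3; apply Rmax_l. Qed.
Lemma dist3_y p q : Rabs (y3 p - y3 q) <= dist3 p q.
Proof. unfold dist3. eapply Rle_trans; [|apply Rmax_r]. apply Rmax_l. Qed.

Section Main2.
Variables (S : surface) (f : pt S -> R3) (lam : pt S -> R).
Hypotheses (ND : nondeg_immersion S f) (SM : smoothM S lam) (HE : h_eq_lam_g S f lam).

Definition PO (c : R) (t : R * R * R) (m : pt S) : Prop :=
  locP S (fun m' => paraboloid c (fst (fst t)) (snd (fst t)) (snd t) (f m')) m.

Lemma para_cover c : (forall m, lam m = c) -> forall m, exists t, PO c t m.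
Proof.
  intros Hc m.
  destruct (chart_cover S m) as [i [p [Up Em]]].
  destruct (chart_setup S f lam ND SM HE i) as [D1 [D2 [D3 [L [CD [HL [F1 [F2 [F3 [FL [Hdet Hh]]]]]]]]]]].
  destruct CD as [[N1 _] [[N2 _] [N3 _]]].
  destruct (para_loc (cdom S i) D1 D2 D3 L c (cdom_open S i) F1 F2 F3 Hdet Hh) with (p := p)
    as [A [B [C [e [He K]]]]]; auto.
  { intros q Uq. rewrite (proj1 HL q Uq). apply Hc. }
  exists (A, B, C). exists i, p, e. split; [auto|]. split; [auto|]. split; [auto|].
  intros q Hq. destruct (K q Hq) as [Uq Eq]. split; auto.
  unfold paraboloid; simpl. rewrite <- (N1 q Uq), <- (N2 q Uq), <- (N3 q Uq). exact Eq.
Qed.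

Lemma para_disj c t t' m : PO c t m -> PO c t' m -> t = t'.
Proof.
  destruct t as [[A B] C]; destruct t' as [[A' B'] C']. unfold PO; simpl.
  intros H1 H2. pose proof H1 as [i [p [e [Up [Em [He K]]]]]].
  destruct (locP_open S (fun m' => paraboloid c A' B' C' (f m')) i p) as [e' [He' K']].
  { split; auto. rewrite Em; auto. }
  destruct (chart_setup S f lam ND SM HE i) as [D1 [D2 [D3 [L [CD [HL [F1 [F2 [F3 [FL [Hdet Hh]]]]]]]]]]].
  destruct CD as [[N1 _] [[N2 _] [N3 _]]].
  set (psi := fun q => (A - A') * D1 nil q + (B - B') * D2 nil q + (C - C')).
  assert (Z : forall q, dist2 q p < Rmin e e' -> psi q = 0).
  { intros q Hq. pose proof (Rmin_l e e'); pose proof (Rmin_r e e').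
    destruct (K q ltac:(lra)) as [Uq P1]. destruct (K' q ltac:(lra)) as [_ P2].
    apply locP_sub in P2. unfold paraboloid in P1, P2.
    unfold psi. rewrite (N1 q Uq), (N2 q Uq). lra. }
  assert (hm : 0 < Rmin e e') by (apply Rmin_pos; auto).
  assert (G : forall a, (A - A') * D1 (a :: nil) p + (B - B') * D2 (a :: nil) p = 0).
  { intros a. apply (uniqueness_limite (fun t => psi (dir a p t)) (crd a p)).
    - unfold psi. eapply dpl_eq. apply dpl_plus. apply dpl_plus; apply dpl_scal; apply (pd_dir (cdom S i)); auto.
      apply dpl_const. ring.
    - apply (dpl_loc (fun _ => 0)). apply dpl_const.
      exists (Rmin e e'); split; auto. intros t Ht. symmetry. apply Z. apply dist_dir; auto. }
  destruct (indep1 D1 D2 p _ _ (Hdet p Up) (G false) (G true)) as [ZA ZB].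
  assert (ZC : psi p = 0) by (apply Z; rewrite dist2_self; auto).
  unfold psi in ZC. rewrite ZA, ZB in ZC.
  f_equal; [f_equal|]; lra.
Qed.
End Main2.

Theorem mainTheorem2 (S : surface) (f : pt S -> R3) (lam : pt S -> R) :
  connected S ->
  nondeg_immersion S f ->
  smoothM S lam ->
  h_eq_lam_g S f lam ->
  ~ d_totally_geodesic S f ->
  exists c : R, c <> 0 /\ (forall m, lam m = c) /\
    (exists A B C : R, image_open_in S (paraboloid c A B C) f) /\
    (exists T : R3 -> R3, affine_isometry T /\
       image_open_in S std_paraboloid (fun m => T (f m))).
Proof.
  intros Hconn ND SM HE NTG.
  assert (M0 : exists m0, lam m0 <> 0).
  { apply NNPP. intros Hn. apply NTG. intros i D1 D2 D3 CD p Up a b.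
    pose proof (HE i D1 D2 D3 CD p Up a b) as X.
    assert (lam (chart S i p) = 0) by (apply NNPP; intro h; apply Hn; eauto).
    rewrite H, Rmult_0_l in X. exact X. }
  destruct M0 as [m0 Hm0].
  set (c := lam m0).
  assert (Hc : forall m, lam m = c).
  { intros m. apply (locP_sub S (fun m' => lam m' = c)).
    apply (conn_family S R (fun c m => locP S (fun m' => lam m' = c) m) Hconn) with (m0 := m0).
    - intros a. apply locP_open.
    - intros a b m' h1 h2. apply locP_sub in h1. apply locP_sub in h2. congruence.
    - intros m'. exists (lam m'). apply (lam_locconst S f lam ND SM HE).
    - apply (lam_locconst S f lam ND SM HE). }
  destruct (para_cover S f lam ND SM HE c Hc m0) as [t0 Ht0].
  assert (HP : forall m, PO S f c t0 m).
  { intros m. apply (conn_family S _ (PO S f c) Hconn) with (m0 := m0); auto.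
    - intros a. apply locP_open.
    - intros a b m'. apply (para_disj S f lam ND SM HE).
    - apply (para_cover S f lam ND SM HE c Hc). }
  destruct t0 as [[A B] C].
  assert (Par : forall m, paraboloid c A B C (f m)).
  { intros m. apply (locP_sub S (fun m' => paraboloid c A B C (f m'))). apply HP. }
  exists c. split; [auto|]. split; [auto|]. split.
  - exists A, B, C. split; auto.
    intros m. destruct (surj_graph S f lam ND SM HE m) as [e [He K]].
    exists e; split; auto. intros q Pq Hq.
    destruct (K (x3 q) (y3 q)) as [m' [E1 E2]].
    + eapply Rle_lt_trans; [apply dist3_x | exact Hq].
    + eapply Rle_lt_trans; [apply dist3_y | exact Hq].
    + exists m'. specialize (Par m'). unfold paraboloid in Par, Pq.
      destruct (f m') as [a1 a2 a3]; destruct q as [q1 q2 q3]; simpl in *. subst. f_equal; try lra.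
  - exists (fun p => mk3 (x3 p + A / c) (y3 p + B / c) (2 / c * (z3 p - C) + ((A / c) ^ 2 + (B / c) ^ 2))).
    split.
    + exists 1, 0, 0, 1, 0, 0, (2 / c), (A / c), (B / c), (- (2 / c) * C + ((A / c) ^ 2 + (B / c) ^ 2)).
      repeat split; try lra. { unfold Rdiv; apply Rmult_integral_contrapositive_currified; [lra | apply Rinv_neq_0_compat; auto]. } intros p. f_equal; field; auto.
    + split.
      * intros m. specialize (Par m). unfold std_paraboloid, paraboloid in *. simpl.
        rewrite Par. field. auto.
      * intros m. destruct (surj_graph S f lam ND SM HE m) as [e [He K]].
        exists e; split; auto. intros q Pq Hq.
        destruct (K (x3 q - A / c) (y3 q - B / c)) as [m' [E1 E2]].
        { eapply Rle_lt_trans; [|exact Hq]. pose proof (dist3_x q (mk3 (x3 (f m) + A / c) (y3 (f m) + B / c)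
            (2 / c * (z3 (f m) - C) + ((A / c) ^ 2 + (B / c) ^ 2)))). simpl in H.
          replace (x3 q - A / c - x3 (f m)) with (x3 q - (x3 (f m) + A / c)) by ring. exact H. }
        { eapply Rle_lt_trans; [|exact Hq]. pose proof (dist3_y q (mk3 (x3 (f m) + A / c) (y3 (f m) + B / c)
            (2 / c * (z3 (f m) - C) + ((A / c) ^ 2 + (B / c) ^ 2)))). simpl in H.
          replace (y3 q - B / c - y3 (f m)) with (y3 q - (y3 (f m) + B / c)) by ring. exact H. }
        exists m'. specialize (Par m'). unfold std_paraboloid, paraboloid in Par, Pq.
        destruct (f m') as [a1 a2 a3]; destruct q as [q1 q2 q3]; simpl in *.
        assert (a1 + A / c = q1) by lra. assert (a2 + B / c = q2) by lra.
        f_equal; auto. rewrite Pq, Par, <- H, <- H0. field. auto.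
Qed.
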